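(* Let $\mathbf{\Sigma}$ be a cluster pattern of rank $n$ with free coefficients at $t_0\in\mathbb{T}_n$, and let $\mathbf{\Sigma}'$ be a cluster pattern of rank $n$ with coefficients in any semifield $\mathbb{P}$ having the same $B$-pattern as $\mathbf{\Sigma}$. Then for any $t,t'\in\mathbb{T}_n$ and any permutation $\sigma\in S_n$: if $\Sigma_t=\sigma\Sigma_{t'}$, then $\Sigma'_t=\sigma\Sigma'_{t'}$.
   Context: A semifield is a multiplicative abelian group $\mathbb{P}$ with a commutative, associative addition $\oplus$ satisfying $(a\oplus b)c=ac\oplus bc$; $\mathbb{Q}\mathbb{P}$ is the fraction field of the group ring $\mathbb{Z}\mathbb{P}$. The universal semifield $\mathbb{Q}_{\mathrm{sf}}(\mathbf{y})$ ($\mathbf{y}=(y_1,\dots,y_n)$ formal variables) consists of rational functions in $\mathbf{y}$ expressible as ratios of nonzero polynomials with nonnegative integer coefficients. A seed with coefficients in $\mathbb{P}$ is $(\mathbf{x},\mathbf{y},B)$ with $\mathbf{x}$ a generating transcendence basis of an ambient field $\mathcal{F}\cong\mathbb{Q}\mathbb{P}(u_1,\dots,u_n)$ over $\mathbb{Q}\mathbb{P}$, $\mathbf{y}\in\mathbb{P}^n$, $B$ an $n\times n$ skew-symmetrizable integer matrix. With $[a]_+=\max(a,0)$ and $\hat y_i=y_i\prod_jx_j^{b_{ji}}$, the mutation $\mu_k$ is: $x'_k=x_k^{-1}\big(\prod_{j}x_j^{[-b_{jk}]_+}\big)\frac{1+\hat y_k}{1\oplus y_k}$, $x'_i=x_i$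 ($i\ne k$); $y'_k=y_k^{-1}$, $y'_i=y_iy_k^{[b_{ki}]_+}(1\oplus y_k)^{-b_{ki}}$ ($i\neq k$); $b'_{ij}=-b_{ij}$ if $i=k$ or $j=k$, and $b'_{ij}=b_{ij}+b_{ik}[b_{kj}]_++[-b_{ik}]_+b_{kj}$ otherwise. $\mathbb{T}_n$ is the $n$-regular tree with edges labeled $1,\dots,n$, distinct at each vertex. A cluster pattern is $\{\Sigma_t=(\mathbf{x}_t,\mathbf{y}_t,B_t)\}_{t\in\mathbb{T}_n}$ with $\Sigma_{t'}=\mu_k(\Sigma_t)$ whenever $t,t'$ are joined by an edge labeled $k$; its $B$-pattern is $\{B_t\}$. It has free coefficients at $t_0$ if its coefficient semifield is $\mathbb{Q}_{\mathrm{sf}}(\mathbf{y})$ and $\mathbf{y}_{t_0}=\mathbf{y}$. For $\sigma\in S_n$, $\sigma(\mathbf{x},\mathbf{y},B)=(\mathbf{x}',\mathbf{y}',B')$ with $x'_i=x_{\sigma^{-1}(i)}$, $y'_i=y_{\sigma^{-1}(i)}$, $b'_{ij}=b_{\sigma^{-1}(i)\sigma^{-1}(j)}$. *)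

(* Defs.v *)
From HB Require Import structures.
From mathcomp Require Import all_boot all_order all_algebra all_fingroup.
From mathcomp Require Import fraction.
From mathcomp.multinomials Require Import mpoly.
From Stdlib Require Import ProofIrrelevance.
Set Implicit Arguments. Unset Strict Implicit. Unset Printing Implicit Defensive.
Import GRing.Theory Num.Theory.
Local Open Scope ring_scope.

Definition nnpoly (n : nat) (p : {mpoly int[n]}) : Prop :=
  p != 0 /\ forall m, 0 <= p@_m.

Lemma nnpoly1 n : nnpoly (1 : {mpoly int[n]}).
Proof. split; first exact: oner_neq0. by move=> m; rewrite mcoeff1 ler0n. Qed.

Lemma nnpolyX n (i : 'I_n) : nnpoly ('X_i : {mpoly int[n]}).
Proof.
split; last by move=> m; rewrite mcoeffX ler0n.
apply/eqP=> h; have := @mcoeffXU n int i i; rewrite h mcoeff0 eqxx => /esym/eqP.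
by rewrite oner_eq0.
Qed.

Lemma nnpolyM n (p q : {mpoly int[n]}) : nnpoly p -> nnpoly q -> nnpoly (p * q).
Proof.
move=> [p0 pc] [q0 qc]; split; first exact: mulf_neq0.
move=> m; rewrite mcoeffM; apply: sumr_ge0 => k _; exact: mulr_ge0.
Qed.

Lemma nnpolyD n (p q : {mpoly int[n]}) : nnpoly p -> nnpoly q -> nnpoly (p + q).
Proof.
move=> [p0 pc] [q0 qc]; split; last by move=> m; rewrite mcoeffD addr_ge0.
case E: (msupp p) => [|m s]; first by move/eqP: E; rewrite msupp_eq0 (negPf p0).
have : m \in msupp p by rewrite E mem_head.
move=> hm; have {hm}: p@_m != 0 by rewrite mcoeff_eq0 hm.
move=> hm; apply/eqP => h.
have : (p + q)@_m = 0 by rewrite h mcoeff0.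
rewrite mcoeffD => /eqP; rewrite paddr_eq0 ?pc ?qc // => /andP[/eqP hp _].
by rewrite hp eqxx in hm.
Qed.

Record semifield := Semifield {
  sf_car :> Type;
  sf_one : sf_car;
  sf_mul : sf_car -> sf_car -> sf_car;
  sf_inv : sf_car -> sf_car;
  sf_add : sf_car -> sf_car -> sf_car;
  sf_mulA : associative sf_mul;
  sf_mulC : commutative sf_mul;
  sf_mul1 : left_id sf_one sf_mul;
  sf_mulV : forall a, sf_mul (sf_inv a) a = sf_one;
  sf_addA : associative sf_add;
  sf_addC : commutative sf_add;
  sf_mulDl : forall a b c, sf_mul (sf_add a b) c = sf_add (sf_mul a c) (sf_mul b c)
}.
Arguments sf_one {_}.
Arguments sf_mul {_}.
Arguments sf_inv {_}.
Arguments sf_add {_}.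

Definition sf_expn (P : semifield) (a : P) (k : nat) : P := iter k (sf_mul a) sf_one.
Definition sf_expz (P : semifield) (a : P) (z : int) : P :=
  match z with Posz k => sf_expn a k | Negz k => sf_inv (sf_expn a k.+1) end.

(** The universal semifield Q_sf(y_1,...,y_n) inside Q(y_1,...,y_n) =
    Frac(Z[y_1,...,y_n]): ratios of nonzero polynomials with nonnegative
    integer coefficients. *)
Definition ratfun (n : nat) := {fraction {mpoly int[n]}}.

Definition subtraction_free (n : nat) (f : ratfun n) : Prop :=
  exists p q : {mpoly int[n]}, [/\ nnpoly p, nnpoly q & f = tofrac p / tofrac q].

Definition Qsf_car (n : nat) := {f : ratfun n | subtraction_free f}.

Lemma Qsf_inj n (a b : Qsf_car n) : proj1_sig a = proj1_sig b -> a = b.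
Proof.
case: a b => [a pa] [b pb] /= E; subst b; f_equal; exact: proof_irrelevance.
Qed.

Lemma nnpoly_frac_neq0 n (p : {mpoly int[n]}) : nnpoly p -> tofrac p != 0.
Proof. by case=> p0 _; rewrite tofrac_eq0. Qed.

Lemma sf_free_neq0 n (f : ratfun n) : subtraction_free f -> f != 0.
Proof.
case=> p [q [hp hq ->]].
by rewrite mulf_neq0 ?invr_eq0 ?nnpoly_frac_neq0.
Qed.

Lemma sf_free1 n : subtraction_free (1 : ratfun n).
Proof. exists 1, 1; split; try exact: nnpoly1. by rewrite tofrac1 divr1. Qed.

Lemma sf_freeX n (i : 'I_n) : subtraction_free (tofrac 'X_i : ratfun n).
Proof. exists 'X_i, 1; split; try exact: nnpoly1; first exact: nnpolyX. by rewrite tofrac1 divr1. Qed.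

Lemma sf_freeM n (f g : ratfun n) :
  subtraction_free f -> subtraction_free g -> subtraction_free (f * g).
Proof.
case=> p1 [q1 [h1 k1 ->]] [p2 [q2 [h2 k2 ->]]].
exists (p1 * p2), (q1 * q2); split; try exact: nnpolyM.
by rewrite mulf_div !tofracM.
Qed.

Lemma sf_freeV n (f : ratfun n) : subtraction_free f -> subtraction_free f^-1.
Proof. case=> p [q [h k ->]]; exists q, p; split => //; by rewrite invf_div. Qed.

Lemma sf_freeD n (f g : ratfun n) :
  subtraction_free f -> subtraction_free g -> subtraction_free (f + g).
Proof.
case=> p1 [q1 [h1 k1 ->]] [p2 [q2 [h2 k2 ->]]].
exists (p1 * q2 + p2 * q1), (q1 * q2); split; try exact: nnpolyM.
  by apply: nnpolyD; apply: nnpolyM.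
by rewrite addf_div ?nnpoly_frac_neq0 // tofracD !tofracM.
Qed.

Definition Qsf_one n : Qsf_car n := exist _ 1 (@sf_free1 n).
Definition Qsf_mul n (a b : Qsf_car n) : Qsf_car n :=
  exist _ _ (sf_freeM (proj2_sig a) (proj2_sig b)).
Definition Qsf_inv n (a : Qsf_car n) : Qsf_car n :=
  exist _ _ (sf_freeV (proj2_sig a)).
Definition Qsf_add n (a b : Qsf_car n) : Qsf_car n :=
  exist _ _ (sf_freeD (proj2_sig a) (proj2_sig b)).

Lemma Qsf_mulA n : associative (@Qsf_mul n).
Proof. by move=> a b c; apply: Qsf_inj; rewrite /= mulrA. Qed.
Lemma Qsf_mulC n : commutative (@Qsf_mul n).
Proof. by move=> a b; apply: Qsf_inj; rewrite /= mulrC. Qed.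
Lemma Qsf_mul1 n : left_id (@Qsf_one n) (@Qsf_mul n).
Proof. by move=> a; apply: Qsf_inj; rewrite /= mul1r. Qed.
Lemma Qsf_mulV n (a : Qsf_car n) : Qsf_mul (Qsf_inv a) a = Qsf_one n.
Proof. by apply: Qsf_inj; rewrite /= mulVf // (sf_free_neq0 (proj2_sig a)). Qed.
Lemma Qsf_addA n : associative (@Qsf_add n).
Proof. by move=> a b c; apply: Qsf_inj; rewrite /= addrA. Qed.
Lemma Qsf_addC n : commutative (@Qsf_add n).
Proof. by move=> a b; apply: Qsf_inj; rewrite /= addrC. Qed.
Lemma Qsf_mulDl n (a b c : Qsf_car n) :
  Qsf_mul (Qsf_add a b) c = Qsf_add (Qsf_mul a c) (Qsf_mul b c).
Proof. by apply: Qsf_inj; rewrite /= mulrDl. Qed.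

Definition Qsf (n : nat) : semifield :=
  @Semifield (Qsf_car n) (Qsf_one n) (@Qsf_mul n) (@Qsf_inv n) (@Qsf_add n)
    (@Qsf_mulA n) (@Qsf_mulC n) (@Qsf_mul1 n) (@Qsf_mulV n)
    (@Qsf_addA n) (@Qsf_addC n) (@Qsf_mulDl n).

Definition Qsf_var (n : nat) (i : 'I_n) : Qsf n := exist _ _ (sf_freeX i).

(** The ambient field of a cluster pattern with coefficients in [P] is a field
    [F] together with the embedding [iota : P -> F] of the multiplicative group
    of [P] (it extends to ZP -> QP -> F).  [F] is isomorphic to QP(u_1..u_n)
    and [x] is a generating transcendence basis of [F] over QP exactly when
    the "monomials" iota(p) * x^a  (p in P, a in N^n) are Z-linearly
    independent in F (i.e. ZP -> F is injective and x is algebraically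
    independent over QP) and every element of F is a ratio of Z-linear
    combinations of such monomials (i.e. F = Frac(ZP[x]) = QP(x)). *)
Definition sf_hom (P : semifield) (F : fieldType) (iota : P -> F) : Prop :=
  iota sf_one = 1 /\ forall a b : P, iota (sf_mul a b) = iota a * iota b.

Definition zpx_eval (P : semifield) (F : fieldType) (iota : P -> F) (n : nat)
    (x : 'I_n -> F) (m : nat) (c : 'I_m -> int) (k : 'I_m -> P * ('I_n -> nat)) : F :=
  \sum_(i < m) (c i)%:~R * (iota (k i).1 * \prod_(j < n) x j ^+ (k i).2 j).

Definition gen_trbasis (P : semifield) (F : fieldType) (iota : P -> F) (n : nat)
    (x : 'I_n -> F) : Prop :=
  (forall (m : nat) (c : 'I_m -> int) (k : 'I_m -> P * ('I_n -> nat)),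
      injective k -> zpx_eval iota x c k = 0 -> forall i, c i = 0) /\
  (forall f : F, exists (m : nat) (c : 'I_m -> int) (k : 'I_m -> P * ('I_n -> nat))
                        (m' : nat) (c' : 'I_m' -> int) (k' : 'I_m' -> P * ('I_n -> nat)),
      zpx_eval iota x c' k' != 0 /\ f = zpx_eval iota x c k / zpx_eval iota x c' k').

Definition skew_symmetrizable (n : nat) (B : 'M[int]_n) : Prop :=
  exists d : 'I_n -> int, (forall i, 0 < d i) /\
    forall i j, d i * B i j = - (d j * B j i).

Record seed (n : nat) (P : semifield) (F : fieldType) := Seed {
  sx : 'I_n -> F;
  sy : 'I_n -> P;
  sB : 'M[int]_n }.
Arguments Seed {n P F}.
Arguments sx {n P F}.
Arguments sy {n P F}.
Arguments sB {n P F}.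

Definition is_seed (n : nat) (P : semifield) (F : fieldType) (iota : P -> F)
    (s : seed n P F) : Prop :=
  gen_trbasis iota (sx s) /\ skew_symmetrizable (sB s).

Definition posp (a : int) : int := Num.max a 0.

Definition mutate (n : nat) (P : semifield) (F : fieldType) (iota : P -> F)
    (k : 'I_n) (s : seed n P F) : seed n P F :=
  let x := sx s in let y := sy s in let B := sB s in
  Seed
    (fun i => if i == k then
       (x k)^-1 * (\prod_(j < n) x j ^ posp (- B j k))
       * (1 + iota (y k) * \prod_(j < n) x j ^ B j k)
       / iota (sf_add sf_one (y k))
     else x i)
    (fun i => if i == k then sf_inv (y k) else
       sf_mul (sf_mul (y i) (sf_expz (y k) (posp (B k i))))
              (sf_expz (sf_add sf_one (y k)) (- B k i)))
    (\matrix_(i, j) if (i == k) || (j == k) then - B i j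
                    else B i j + B i k * posp (B k j) + posp (- B i k) * B k j).

Definition perm_seed (n : nat) (P : semifield) (F : fieldType) (sigma : 'S_n)
    (s : seed n P F) : seed n P F :=
  Seed (fun i => sx s ((sigma^-1)%g i)) (fun i => sy s ((sigma^-1)%g i))
       (\matrix_(i, j) sB s ((sigma^-1)%g i) ((sigma^-1)%g j)).

Definition seed_eq (n : nat) (P : semifield) (F : fieldType) (s s' : seed n P F) : Prop :=
  (forall i, sx s i = sx s' i) /\ (forall i, sy s i = sy s' i) /\ sB s = sB s'.

(** * The n-regular tree T_n: vertices are reduced words in the labels,
    two vertices are joined by an edge labeled k iff one is obtained from the
    other by appending the letter k. *)
Definition tnode (n : nat) := {w : seq 'I_n | sorted (fun a b : 'I_n => a != b) w}.

Definition tedge (n : nat) (k : 'I_n) (t t' : tnode n) : Prop :=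
  proj1_sig t' = rcons (proj1_sig t) k \/ proj1_sig t = rcons (proj1_sig t') k.

Definition cluster_pattern (n : nat) (P : semifield) (F : fieldType) (iota : P -> F)
    (Sigma : tnode n -> seed n P F) : Prop :=
  sf_hom iota /\ (forall t, is_seed iota (Sigma t)) /\
  (forall (k : 'I_n) (t t' : tnode n), tedge k t t' ->
      seed_eq (Sigma t') (mutate iota k (Sigma t))).

Definition free_coeffs_at (n : nat) (F : fieldType)
    (Sigma : tnode n -> seed n (Qsf n) F) (t0 : tnode n) : Prop :=
  forall i, sy (Sigma t0) i = Qsf_var i.

(* Main.v *)
Require Import Defs.
From HB Require Import structures.
From mathcomp Require Import all_boot all_order all_algebra all_fingroup.
From mathcomp Require Import fraction.
From mathcomp.multinomials Require Import mpoly.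
From Stdlib Require Import ClassicalEpsilon FunctionalExtensionality ProofIrrelevance.
Set Implicit Arguments. Unset Strict Implicit. Unset Printing Implicit Defensive.
Import GRing.Theory Num.Theory.
Local Open Scope ring_scope.

Definition cl (T : Type) := T.
Definition cl_eq (T : Type) (a b : cl T) : bool :=
  if excluded_middle_informative (a = b) then true else false.
Lemma cl_eqP (T : Type) : Equality.axiom (@cl_eq T).
Proof. move=> a b; rewrite /cl_eq; case: excluded_middle_informative => h; constructor => //. Qed.
HB.instance Definition _ (T : Type) := hasDecEq.Build (cl T) (@cl_eqP T).
Definition cl_find (T : Type) (P : pred (cl T)) (n : nat) : option (cl T) :=
  match excluded_middle_informative (exists x, P x) with
  | left h => Some (proj1_sig (constructive_indefinite_description _ h))
  | right _ => None end.
Lemma cl_find_correct (T : Type) P n (x : cl T) : cl_find P n = Some x -> P x.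
Proof. rewrite /cl_find; case: excluded_middle_informative => // h [<-].
by case: constructive_indefinite_description. Qed.
Lemma cl_find_complete (T : Type) (P : pred (cl T)) : (exists x, P x) -> exists n, cl_find P n.
Proof. move=> h; exists 0%N; rewrite /cl_find; case: excluded_middle_informative => //. Qed.
Lemma cl_find_ext (T : Type) (P Q : pred (cl T)) : P =1 Q -> cl_find P =1 cl_find Q.
Proof. move=> h; have -> : P = Q by apply: functional_extensionality. by []. Qed.
HB.instance Definition _ (T : Type) := hasChoice.Build (cl T)
  (@cl_find_correct T) (@cl_find_complete T) (@cl_find_ext T).

Section OS.
Variable P : semifield.
Definition optS := option (cl P).
HB.instance Definition _ := Choice.on optS.
Definition addS (a b : optS) : optS := match a, b with
  | None, _ => b | _, None => a | Some x, Some y => Some (sf_add x y) end.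
Definition mulS (a b : optS) : optS := match a, b with
  | Some x, Some y => Some (sf_mul x y) | _, _ => None end.
Lemma addSA : associative addS.
Proof. by case=> [x|] [y|] [z|] //=; rewrite sf_addA. Qed.
Lemma addSC : commutative addS.
Proof. by case=> [x|] [y|] //=; rewrite sf_addC. Qed.
Lemma add0S : left_id None addS. Proof. by case. Qed.
HB.instance Definition _ := GRing.isNmodule.Build optS addSA addSC add0S.
Lemma mulSA : associative mulS.
Proof. by case=> [x|] [y|] [z|] //=; rewrite sf_mulA. Qed.
Lemma mulSC : commutative mulS.
Proof. by case=> [x|] [y|] //=; rewrite sf_mulC. Qed.
Lemma mul1S : left_id (Some sf_one) mulS.
Proof. by case=> [x|] //=; rewrite sf_mul1. Qed.
Lemma mulSDl : left_distributive mulS addS.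
Proof. by case=> [x|] [y|] [z|] //=; rewrite sf_mulDl. Qed.
Lemma mul0S : left_zero None mulS. Proof. by []. Qed.
HB.instance Definition _ := GRing.Nmodule_isComPzSemiRing.Build optS mulSA mulSC mul1S mulSDl mul0S.
End OS.
Section SF.
Variable P : semifield.
Implicit Types a b c : P.
Lemma sf_mulr1 a : sf_mul a sf_one = a. Proof. by rewrite sf_mulC sf_mul1. Qed.
Lemma sf_mulrV a : sf_mul a (sf_inv a) = sf_one. Proof. by rewrite sf_mulC sf_mulV. Qed.
Lemma sf_mulK a b : sf_mul (sf_mul a b) (sf_inv b) = a.
Proof. by rewrite -sf_mulA sf_mulrV sf_mulr1. Qed.
Lemma sf_mulIr a b c : sf_mul a c = sf_mul b c -> a = b.
Proof. by move=> h; rewrite -(sf_mulK a c) h sf_mulK. Qed.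
Lemma sf_invM a b : sf_inv (sf_mul a b) = sf_mul (sf_inv a) (sf_inv b).
Proof.
apply: (@sf_mulIr _ _ (sf_mul a b)); rewrite sf_mulV.
rewrite [sf_mul a b]sf_mulC sf_mulA -[sf_mul (sf_mul _ _) b]sf_mulA sf_mulV sf_mulr1.
by rewrite sf_mulV.
Qed.
Lemma sf_inv1 : sf_inv (@sf_one P) = sf_one.
Proof. by rewrite -[sf_inv _]sf_mulr1 sf_mulV. Qed.
Lemma sf_invK a : sf_inv (sf_inv a) = a.
Proof. by apply: (@sf_mulIr _ _ (sf_inv a)); rewrite sf_mulV sf_mulrV. Qed.
End SF.
Lemma absz_sum_nn (T : Type) (s : seq T) (F : T -> int) :
  (forall x, 0 <= F x) -> `|(\sum_(x <- s) F x)%R|%N = (\sum_(x <- s) `|F x|)%N.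
Proof.
move=> h; elim: s => [|x s IH]; first by rewrite !big_nil.
rewrite !big_cons -IH.
have h1 := h x; have h2 : 0 <= \sum_(x <- s) F x by apply: sumr_ge0.
by case: (F x) h1 => // a _; case: (\sum_(x <- s) F x) h2.
Qed.

Lemma abszD_nn (a b : int) : 0 <= a -> 0 <= b -> `|(a + b)%R|%N = (`|a| + `|b|)%N.
Proof. by case: a => // a _; case: b. Qed.

Section EV.
Variables (n : nat) (P : semifield) (y : 'I_n -> P).
Definition mono (m : 'X_{1..n}) : optS P := \prod_(i < n) (Some (y i) : optS P) ^+ m i.
Definition ev (p : {mpoly int[n]}) : optS P :=
  \sum_(m <- msupp p) (`|p@_m|%N)%:R * mono m.

Lemma ev_sub (s : seq 'X_{1..n}) p : uniq s -> {subset msupp p <= s} ->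
  ev p = \sum_(m <- s) (`|p@_m|%N)%:R * mono m.
Proof.
move=> us sub; rewrite (bigID (mem (msupp p))) /= [X in _ = _ + X]big1 ?addr0; last first.
  by move=> m /negP hm; have /eqP -> : p@_m == 0 by rewrite mcoeff_eq0; apply/negP.
rewrite -big_filter /ev; apply: perm_big; apply: uniq_perm.
- exact: msupp_uniq.
- exact: filter_uniq.
by move=> m; rewrite mem_filter; case h: (m \in msupp p) => //=; rewrite (sub _ h).
Qed.

Lemma monoD m1 m2 : mono (m1 + m2)%MM = mono m1 * mono m2.
Proof. by rewrite /mono -big_split; apply: eq_bigr => i _; rewrite mnmDE exprD. Qed.

Lemma evD p q : (forall m, 0 <= p@_m) -> (forall m, 0 <= q@_m) -> ev (p + q) = ev p + ev q.
Proof.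
move=> hp hq; set s := undup (msupp p ++ msupp q).
have us : uniq s by apply: undup_uniq.
rewrite (@ev_sub s (p + q)) //; last by move=> m /msuppD_le; rewrite mem_undup.
rewrite (@ev_sub s p) //; last by move=> m h; rewrite mem_undup mem_cat h.
rewrite (@ev_sub s q) //; last by move=> m h; rewrite mem_undup mem_cat h orbT.
rewrite -big_split; apply: eq_bigr => m _ /=.
by rewrite mcoeffD abszD_nn // natrD mulrDl.
Qed.

Lemma evM p q : (forall m, 0 <= p@_m) -> (forall m, 0 <= q@_m) -> ev (p * q) = ev p * ev q.
Proof.
move=> hp hq; set s := undup [seq (mm.1 + mm.2)%MM | mm <- (allpairs pair (msupp p) (msupp q))].
have us : uniq s by apply: undup_uniq.
have hpq : forall m, (p * q)@_m = \sum_(mm <- allpairs pair (msupp p) (msupp q))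
    (p@_mm.1 * q@_mm.2) * ((mm.1 + mm.2)%MM == m)%:R.
  move=> m; rewrite mpolyME raddf_sum; apply: eq_bigr => mm _ /=.
  by rewrite -mul_mpolyC mcoeffCM mcoeffX.
rewrite (@ev_sub s (p * q)) //; last first.
  move=> m /msuppM_le; rewrite mem_undup.
  move/allpairsP => [[m1 m2] [h1 h2 ->]]; apply/mapP; exists (m1, m2) => //.
  by apply/allpairsP; exists (m1, m2).
have nn : forall m mm, 0 <= p@_mm.1 * q@_mm.2 * ((mm.1 + mm.2)%MM == m)%:R.
  by move=> m mm; apply: mulr_ge0; [apply: mulr_ge0 | apply: ler0n].
under eq_bigr => m _ do rewrite hpq (absz_sum_nn _ (nn m)).
under eq_bigr => m _ do rewrite natr_sum mulr_suml.
rewrite exchange_big /=.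
rewrite /ev mulr_suml; rewrite big_allpairs_dep /=.
apply: eq_big_seq => m1 h1; rewrite mulr_sumr; apply: eq_big_seq => m2 h2.
rewrite (bigD1_seq (m1 + m2)%MM) //=; last first.
  rewrite mem_undup; apply/mapP; exists (m1, m2) => //.
  by apply/allpairsP; exists (m1, m2).
rewrite big1 ?addr0; last first.
  by move=> m /negPf hm; rewrite eq_sym hm mulr0.
by rewrite eqxx mulr1 abszM natrM monoD mulrACA.
Qed.
End EV.
Section SF2.
Variable P : semifield.
Implicit Types a b c d : P.
Lemma sf_mulCA a b c : sf_mul a (sf_mul b c) = sf_mul b (sf_mul a c).
Proof. by rewrite sf_mulA [sf_mul a b]sf_mulC -sf_mulA. Qed.
Lemma sf_mulAC a b c : sf_mul (sf_mul a b) c = sf_mul (sf_mul a c) b.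
Proof. by rewrite -sf_mulA [sf_mul b c]sf_mulC sf_mulA. Qed.
Lemma sf_mulACA a b c d : sf_mul (sf_mul a b) (sf_mul c d) = sf_mul (sf_mul a c) (sf_mul b d).
Proof. by rewrite -sf_mulA (sf_mulCA b) sf_mulA. Qed.
Lemma sf_frac_eq a b c d : sf_mul a d = sf_mul c b ->
  sf_mul a (sf_inv b) = sf_mul c (sf_inv d).
Proof.
move=> h; apply: (@sf_mulIr _ _ _ (sf_mul b d)).
rewrite -sf_mulA [sf_mul (sf_inv b) _]sf_mulA sf_mulV sf_mul1 h.
by rewrite [sf_mul b d]sf_mulC -sf_mulA [sf_mul (sf_inv d) _]sf_mulA sf_mulV sf_mul1.
Qed.
Lemma sf_mulDr a b c : sf_mul a (sf_add b c) = sf_add (sf_mul a b) (sf_mul a c).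
Proof. by rewrite sf_mulC sf_mulDl !(sf_mulC a). Qed.
End SF2.

Section EV2.
Variables (n : nat) (P : semifield) (y : 'I_n -> P).
Local Notation ev := (@ev n P y).
Lemma addS_some (a b : optS P) : a != None -> a + b != None.
Proof. by case: a => // x _; case: b. Qed.
Lemma mulS_some (a b : optS P) : a != None -> b != None -> a * b != None.
Proof. by case: a => // x _; case: b. Qed.
Lemma natS_some k : ((k.+1)%:R : optS P) != None.
Proof. by rewrite -add1n natrD; apply: addS_some. Qed.
Lemma exprS_some (a : optS P) k : a != None -> a ^+ k != None.
Proof. move=> h; elim: k => [|k IH]; first by []. by rewrite exprS mulS_some. Qed.
Lemma mono_some m : mono y m != None.
Proof.
rewrite /mono; elim/big_rec: _ => [|i x _ h]; first by [].
by apply: mulS_some => //; apply: exprS_some.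
Qed.
Lemma ev_some p : nnpoly p -> ev p != None.
Proof.
case=> p0 _; rewrite /ev; case E: (msupp p) => [|m s].
  by move/eqP: E; rewrite msupp_eq0 (negPf p0).
rewrite big_cons; apply: addS_some; apply: mulS_some; last exact: mono_some.
have : m \in msupp p by rewrite E mem_head.
rewrite mcoeff_msupp => hm; case E2: (`|p@_m|%N) => [|k].
  by move: hm; rewrite -absz_eq0 E2.
exact: natS_some.
Qed.
Definition evP p : P := odflt sf_one (ev p).
Lemma evPE p : nnpoly p -> Some (evP p) = ev p.
Proof. by move/ev_some; rewrite /evP; case: (ev p). Qed.
Lemma evP_mul p q : nnpoly p -> nnpoly q -> evP (p * q) = sf_mul (evP p) (evP q).
Proof.
move=> hp hq; have hpq := nnpolyM hp hq.
have := evPE hpq; rewrite evM; last by case: hq. 2: by case: hp.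
by rewrite -(evPE hp) -(evPE hq) => -[].
Qed.
Lemma evP_add p q : nnpoly p -> nnpoly q -> evP (p + q) = sf_add (evP p) (evP q).
Proof.
move=> hp hq; have hpq := nnpolyD hp hq.
have := evPE hpq; rewrite evD; last by case: hq. 2: by case: hp.
by rewrite -(evPE hp) -(evPE hq) => -[].
Qed.
Lemma evP1 : evP 1 = sf_one.
Proof.
have h : ev 1 = 1.
  rewrite /ev msupp1 big_cons big_nil mcoeff1 eqxx addr0 mul1r /mono.
  by rewrite big1 // => i _; rewrite mnm0E expr0.
by have := evPE (nnpoly1 n); rewrite h => -[].
Qed.
Lemma evPX i : evP 'X_i = y i.
Proof.
have h : ev 'X_i = Some (y i).
  rewrite /ev msuppX big_cons big_nil mcoeffX eqxx addr0 mul1r /mono.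
  rewrite (bigD1 i) //= big1 ?mulr1; last first.
    by move=> j /negPf hj; rewrite mnm1E eq_sym hj expr0.
  by rewrite mnm1E eqxx expr1.
by have := evPE (nnpolyX i); rewrite h => -[].
Qed.
End EV2.
Section PSI.
Variables (n : nat) (P : semifield) (y : 'I_n -> P).
Local Notation evP := (@evP n P y).
Local Notation cid := constructive_indefinite_description.

Definition psi (f : Qsf n) : P :=
  let (p, h) := cid _ (proj2_sig f) in let (q, _) := cid _ h in
  sf_mul (evP p) (sf_inv (evP q)).

Lemma psiE (f : Qsf n) p q : nnpoly p -> nnpoly q ->
  proj1_sig f = tofrac p / tofrac q -> psi f = sf_mul (evP p) (sf_inv (evP q)).
Proof.
move=> hp hq hf; rewrite /psi; case: cid => p0 h; case: cid => q0 [hp0 hq0 e].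
apply: sf_frac_eq; rewrite -!evP_mul //.
have E : p0 * q = p * q0.
  apply/eqP; rewrite -tofrac_eq !tofracM.
  have nq := nnpoly_frac_neq0 hq; have nq0 := nnpoly_frac_neq0 hq0.
  by move: e; rewrite hf => /eqP; rewrite (eqr_div _ _ nq nq0) => /eqP ->.
by rewrite E.
Qed.

Lemma psi_mul (a b : Qsf n) : psi (sf_mul a b) = sf_mul (psi a) (psi b).
Proof.
case: (proj2_sig a) => p [q [hp hq ea]]; case: (proj2_sig b) => p' [q' [hp' hq' eb]].
rewrite (psiE hp hq ea) (psiE hp' hq' eb) (@psiE _ (p * p') (q * q')); try exact: nnpolyM.
  by rewrite !evP_mul // sf_mulACA sf_invM.
by rewrite /= ea eb !tofracM mulf_div.
Qed.

Lemma psi_inv (a : Qsf n) : psi (sf_inv a) = sf_inv (psi a).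
Proof.
case: (proj2_sig a) => p [q [hp hq ea]].
rewrite (psiE hp hq ea) (@psiE _ q p) //; last by rewrite /= ea invf_div.
by rewrite sf_invM sf_invK sf_mulC.
Qed.

Lemma psi_add (a b : Qsf n) : psi (sf_add a b) = sf_add (psi a) (psi b).
Proof.
case: (proj2_sig a) => p [q [hp hq ea]]; case: (proj2_sig b) => p' [q' [hp' hq' eb]].
rewrite (psiE hp hq ea) (psiE hp' hq' eb) (@psiE _ (p * q' + p' * q) (q * q')); first last.
- by rewrite /= ea eb addf_div ?nnpoly_frac_neq0 // tofracD !tofracM.
- exact: nnpolyM.
- by apply: nnpolyD; apply: nnpolyM.
rewrite evP_add ?evP_mul //; try exact: nnpolyM.
rewrite sf_mulDl sf_invM.
congr sf_add.
  by rewrite sf_mulACA sf_mulrV sf_mulr1.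
by rewrite [sf_mul (sf_inv _) _]sf_mulC sf_mulACA sf_mulrV sf_mulr1.
Qed.

Lemma psi_one : psi sf_one = sf_one.
Proof.
rewrite (@psiE _ 1 1) ?evP1 ?sf_inv1 ?sf_mulr1 //; try exact: nnpoly1.
by rewrite /= tofrac1 divr1.
Qed.

Lemma psi_var i : psi (Qsf_var i) = y i.
Proof.
rewrite (@psiE _ 'X_i 1) ?evP1 ?evPX ?sf_inv1 ?sf_mulr1 //; first exact: nnpolyX.
  exact: nnpoly1.
by rewrite /= tofrac1 divr1.
Qed.
End PSI.
Lemma sf_hom_neq0 (P : semifield) (F : fieldType) (iota : P -> F) :
  sf_hom iota -> forall a, iota a != 0.
Proof.
move=> [h1 hM] a; apply/eqP => h.
by have := hM (sf_inv a) a; rewrite sf_mulV h1 h mulr0 => /eqP; rewrite oner_eq0.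
Qed.

Lemma sf_expn_hom (P Q : semifield) (psi : P -> Q) :
  psi sf_one = sf_one -> (forall a b, psi (sf_mul a b) = sf_mul (psi a) (psi b)) ->
  forall a k, psi (sf_expn a k) = sf_expn (psi a) k.
Proof. by move=> h1 hM a; elim=> [|k IH] //=; rewrite hM IH. Qed.

Lemma prod_delta (n : nat) (R : comNzRingType) (x : 'I_n -> R) i :
  \prod_(j < n) x j ^+ (i == j : nat) = x i.
Proof.
rewrite (bigD1 i) //= eqxx expr1 big1 ?mulr1 // => j /negPf hj.
by rewrite eq_sym hj expr0.
Qed.

Section Transfer.
Variables (n : nat) (P0 P : semifield) (F F' : fieldType).
Variables (iota : P0 -> F) (iota' : P -> F') (psi : P0 -> P).
Variables (x0 : 'I_n -> F) (x0' : 'I_n -> F').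
Hypothesis iota_hom : sf_hom iota.
Hypothesis iota'_hom : sf_hom iota'.
Hypothesis psi1 : psi sf_one = sf_one.
Hypothesis psiM : forall a b, psi (sf_mul a b) = sf_mul (psi a) (psi b).
Hypothesis indep : forall (m : nat) (c : 'I_m -> int) (k : 'I_m -> P0 * ('I_n -> nat)),
      injective k -> zpx_eval iota x0 c k = 0 -> forall i, c i = 0.

Definition K := cl (P0 * ('I_n -> nat))%type.
Definition fK (k : K) : F := iota k.1 * \prod_(j < n) x0 j ^+ k.2 j.
Definition gK (k : K) : F' := iota' (psi k.1) * \prod_(j < n) x0' j ^+ k.2 j.
Definition evF (l : seq (int * K)) : F := \sum_(e <- l) e.1%:~R * fK e.2.
Definition evG (l : seq (int * K)) : F' := \sum_(e <- l) e.1%:~R * gK e.2.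

Lemma group_sum (R : nzRingType) (G : K -> R) (l : seq (int * K)) :
  \sum_(e <- l) e.1%:~R * G e.2 =
  \sum_(k <- undup (map snd l)) (\sum_(e <- l | e.2 == k) e.1)%:~R * G k.
Proof.
under [RHS]eq_bigr => k _ do rewrite (big_morph _ (@intrD R) (mulr0z 1)) mulr_suml.
rewrite (exchange_big_dep xpredT) //=.
apply: eq_big_seq => e he.
rewrite big_mkcond (bigD1_seq e.2) ?undup_uniq ?mem_undup ?map_f //= eqxx big1 ?addr0 //.
by move=> k /negPf; rewrite eq_sym => ->.
Qed.

Lemma transfer l : evF l = 0 -> evG l = 0.
Proof.
rewrite /evF /evG !group_sum; set ks := undup (map snd l) => h.
suff hc : forall k, k \in ks -> \sum_(e <- l | e.2 == k) e.1 = 0.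
  by rewrite big1_seq // => k /andP[_ hk]; rewrite hc // mul0r.
have inj : injective (tnth (in_tuple ks)) by apply/tuple_uniqP; apply: undup_uniq.
have := @indep (size ks) (fun i => \sum_(e <- l | e.2 == tnth (in_tuple ks) i) e.1)
   (tnth (in_tuple ks)) inj.
move=> H k hk; have /tnthP [i ->] : k \in in_tuple ks by []. apply: H.
by rewrite -h /zpx_eval [in RHS]big_tnth.
Qed.

Definition kmul (a b : K) : K := (sf_mul a.1 b.1, fun j => (a.2 j + b.2 j)%N).
Definition kone : K := (sf_one, fun _ => 0%N).
Definition lmul (l1 l2 : seq (int * K)) : seq (int * K) :=
  [seq (e1.1 * e2.1, kmul e1.2 e2.2) | e1 <- l1, e2 <- l2].
Definition lneg (l : seq (int * K)) : seq (int * K) := [seq (- e.1, e.2) | e <- l].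
Definition evX (R : comNzRingType) (G : K -> R) (l : seq (int * K)) : R :=
  \sum_(e <- l) e.1%:~R * G e.2.

Lemma evX_cat (R : comNzRingType) (G : K -> R) l1 l2 : evX G (l1 ++ l2) = evX G l1 + evX G l2.
Proof. exact: big_cat. Qed.
Lemma evX_neg (R : comNzRingType) (G : K -> R) l : evX G (lneg l) = - evX G l.
Proof. by rewrite /evX big_map -sumrN; apply: eq_bigr => e _ /=; rewrite intrN mulNr. Qed.
Lemma evX_mul (R : comNzRingType) (G : K -> R) l1 l2 :
  (forall a b, G (kmul a b) = G a * G b) -> evX G (lmul l1 l2) = evX G l1 * evX G l2.
Proof.
move=> GM; rewrite /evX /lmul big_allpairs_dep mulr_suml; apply: eq_bigr => e1 _.
rewrite mulr_sumr; apply: eq_bigr => e2 _ /=.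
by rewrite intrM GM mulrACA.
Qed.
Lemma evX_single (R : comNzRingType) (G : K -> R) z k : evX G [:: (z, k)] = z%:~R * G k.
Proof. by rewrite /evX big_cons big_nil addr0. Qed.

Lemma fK_mul a b : fK (kmul a b) = fK a * fK b.
Proof.
rewrite /fK /= (proj2 iota_hom) mulrACA -big_split; congr (_ * _).
by apply: eq_bigr => j _; rewrite exprD.
Qed.
Lemma gK_mul a b : gK (kmul a b) = gK a * gK b.
Proof.
rewrite /gK /= psiM (proj2 iota'_hom) mulrACA -big_split; congr (_ * _).
by apply: eq_bigr => j _; rewrite exprD.
Qed.
Lemma fK_one : fK kone = 1.
Proof. by rewrite /fK /= (proj1 iota_hom) mul1r big1 // => j _; rewrite expr0. Qed.
Lemma gK_one : gK kone = 1.
Proof. by rewrite /gK /= psi1 (proj1 iota'_hom) mul1r big1 // => j _; rewrite expr0. Qed.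

Definition Rel (f : F) (g : F') : Prop := exists ln ld : seq (int * K),
  [/\ f = evX fK ln / evX fK ld, g = evX gK ln / evX gK ld & evX gK ld != 0].

Lemma transferX l : evX fK l = 0 -> evX gK l = 0.
Proof. exact: transfer. Qed.
Lemma nzX l : evX gK l != 0 -> evX fK l != 0.
Proof. by apply: contra => /eqP /transferX ->. Qed.

Lemma Rel_fun f g1 g2 : Rel f g1 -> Rel f g2 -> g1 = g2.
Proof.
move=> [n1 [d1 [e1 -> h1]]] [n2 [d2 [e2 -> h2]]].
have h1' := nzX h1; have h2' := nzX h2.
have E : evX fK (lmul n1 d2 ++ lneg (lmul n2 d1)) = 0.
  rewrite evX_cat evX_neg !evX_mul; try exact: fK_mul.
  apply/eqP; rewrite subr_eq0; apply/eqP.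
  by move: e2; rewrite e1 => /eqP; rewrite (eqr_div _ _ h1' h2') => /eqP.
have := transferX E; rewrite evX_cat evX_neg !evX_mul; try exact: gK_mul.
move/eqP; rewrite subr_eq0 => /eqP E'.
by apply/eqP; rewrite (eqr_div _ _ h1 h2) E'.
Qed.

Lemma Rel_add f1 g1 f2 g2 : Rel f1 g1 -> Rel f2 g2 -> Rel (f1 + f2) (g1 + g2).
Proof.
move=> [n1 [d1 [-> -> h1]]] [n2 [d2 [-> -> h2]]].
have h1' := nzX h1; have h2' := nzX h2.
exists (lmul n1 d2 ++ lmul n2 d1), (lmul d1 d2); split.
- by rewrite evX_cat !evX_mul ?addf_div //; exact: fK_mul.
- by rewrite evX_cat !evX_mul ?addf_div //; exact: gK_mul.
by rewrite evX_mul ?mulf_neq0 //; exact: gK_mul.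
Qed.
Lemma Rel_mul f1 g1 f2 g2 : Rel f1 g1 -> Rel f2 g2 -> Rel (f1 * f2) (g1 * g2).
Proof.
move=> [n1 [d1 [-> -> h1]]] [n2 [d2 [-> -> h2]]].
exists (lmul n1 n2), (lmul d1 d2); split.
- by rewrite !evX_mul ?mulf_div //; exact: fK_mul.
- by rewrite !evX_mul ?mulf_div //; exact: gK_mul.
by rewrite evX_mul ?mulf_neq0 //; exact: gK_mul.
Qed.
Lemma Rel_inv f g : Rel f g -> g != 0 -> Rel f^-1 g^-1.
Proof.
move=> [n1 [d1 [-> -> h1]]] hg; exists d1, n1; split; try by rewrite invf_div.
by apply: contra hg => /eqP ->; rewrite mul0r.
Qed.
Lemma Rel_key k : Rel (fK k) (gK k).
Proof.
exists [:: (1, k)], [:: (1, kone)]; rewrite !evX_single fK_one gK_one !mul1r !divr1.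
by split => //; apply: oner_neq0.
Qed.
Lemma Rel_int z : Rel z%:~R z%:~R.
Proof.
exists [:: (z, kone)], [:: (1, kone)]; rewrite !evX_single fK_one gK_one !mul1r !mulr1 !divr1.
by split => //; apply: oner_neq0.
Qed.
Lemma Rel_one : Rel 1 1.
Proof. exact: (Rel_int 1). Qed.
Lemma Rel_nz f g : Rel f g -> g != 0 -> f != 0.
Proof.
move=> [n1 [d1 [-> -> h1]]] hg.
have hn : evX gK n1 != 0 by apply: contra hg => /eqP ->; rewrite mul0r.
apply: mulf_neq0; first exact: nzX.
by rewrite invr_eq0; apply: nzX.
Qed.
Lemma Rel_expn f g k : Rel f g -> Rel (f ^+ k) (g ^+ k).
Proof.
move=> h; elim: k => [|k IH]; first by rewrite !expr0; exact: Rel_one.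
by rewrite !exprS; apply: Rel_mul.
Qed.
Lemma Rel_expz f g (z : int) : Rel f g -> g != 0 -> Rel (f ^ z) (g ^ z).
Proof.
move=> h hg; case: z => k; first by rewrite -!exprnP; apply: Rel_expn.
apply: Rel_inv; [exact: Rel_expn | exact: expf_neq0].
Qed.
Lemma Rel_prod (Fi : 'I_n -> F) (Gi : 'I_n -> F') :
  (forall i, Rel (Fi i) (Gi i)) -> Rel (\prod_(i < n) Fi i) (\prod_(i < n) Gi i).
Proof.
move=> h; apply: (big_ind2 Rel Rel_one) => //; move=> *; exact: Rel_mul.
Qed.
Hypothesis psiV : forall a, psi (sf_inv a) = sf_inv (psi a).
Hypothesis psiA : forall a b, psi (sf_add a b) = sf_add (psi a) (psi b).

Lemma psi_expz a z : psi (sf_expz a z) = sf_expz (psi a) z.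
Proof. by case: z => k; rewrite /sf_expz ?psiV (sf_expn_hom psi1 psiM). Qed.

Lemma Rel_iota p : Rel (iota p) (iota' (psi p)).
Proof.
have := Rel_key (p, fun _ => 0%N).
by rewrite /fK /gK /= !big1 ?mulr1 // => j _; rewrite expr0.
Qed.

Definition Corr (s : seed n P0 F) (s' : seed n P F') : Prop :=
  (forall i, Rel (sx s i) (sx s' i)) /\ (forall i, psi (sy s i) = sy s' i) /\ sB s = sB s'.

Lemma Corr_mutate k s s' : Corr s s' -> (forall i, sx s' i != 0) ->
  Corr (mutate iota k s) (mutate iota' k s').
Proof.
move=> [hx [hy hB]] nz; split; [|split].
- move=> i; rewrite /mutate /=; case: (i == k); last exact: hx.
  rewrite -hB -!hy.
  have E : sf_add sf_one (psi (sy s k)) = psi (sf_add sf_one (sy s k)) by rewrite psiA psi1.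
  rewrite E.
  apply: Rel_mul; last by apply: Rel_inv; [exact: Rel_iota | exact: sf_hom_neq0].
  apply: Rel_mul; last first.
    apply: Rel_add; first exact: Rel_one; apply: Rel_mul; first exact: Rel_iota.
    by apply: Rel_prod => j; apply: Rel_expz.
  apply: Rel_mul; first exact: Rel_inv.
  by apply: Rel_prod => j; apply: Rel_expz.
- move=> i; rewrite /mutate /=; case: (i == k); first by rewrite psiV hy.
  by rewrite !psiM !psi_expz psiA psi1 !hy hB.
by rewrite /mutate /= hB.
Qed.

Lemma Rel_x i : Rel (x0 i) (x0' i).
Proof.
have := Rel_key (sf_one, fun j => (i == j : nat)).
by rewrite /fK /gK /= psi1 (proj1 iota_hom) (proj1 iota'_hom) !mul1r !prod_delta.
Qed.
End Transfer.
Lemma gen_nz (n : nat) (P : semifield) (F : fieldType) (iota : P -> F) (x : 'I_n -> F) :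
  sf_hom iota -> gen_trbasis iota x -> forall i, x i != 0.
Proof.
move=> [h1 _] [gi _] i; apply/eqP => h.
have inj : injective (fun _ : 'I_1 => (sf_one, fun j => (i == j : nat)) : P * ('I_n -> nat)).
  by move=> a b _; rewrite (ord1 a) (ord1 b).
have := gi 1%N (fun _ => 1) _ inj.
rewrite /zpx_eval big_ord1 /= h1 mul1r mul1r prod_delta h => /(_ erefl ord0) /eqP.
by rewrite oner_eq0.
Qed.

Lemma tedge_sym (n : nat) (k : 'I_n) t t' : tedge k t t' -> tedge k t' t.
Proof. by case=> h; [right | left]. Qed.

Lemma sorted_rcons_inv (n : nat) (w : seq 'I_n) k :
  sorted (fun a b : 'I_n => a != b) (rcons w k) -> sorted (fun a b : 'I_n => a != b) w.
Proof. case: w => [|a w] //=; rewrite rcons_path => /andP[]. by []. Qed.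

Lemma tree_reach (n : nat) (Q : tnode n -> Prop)
  (step : forall k t t', tedge k t t' -> Q t -> Q t') :
  forall t0 t, Q t0 -> Q t.
Proof.
have root_eq : forall w (hw : sorted (fun a b : 'I_n => a != b) w),
    Q (exist _ w hw) <-> Q (exist _ [::] (erefl true)).
  elim/last_ind => [|w k IH] hw.
    by have -> : hw = erefl true by apply: bool_irrelevance.
  have hw' := sorted_rcons_inv hw.
  have e : tedge k (exist _ w hw') (exist _ (rcons w k) hw) by left.
  rewrite -(IH hw'); split; [apply: step; exact: tedge_sym e | exact: step e].
move=> [w0 h0] [w h] H; apply/root_eq; exact/(root_eq _ h0).
Qed.

Lemma Corr_eq (n : nat) (P0 P : semifield) (F F' : fieldType) (iota : P0 -> F)
  (iota' : P -> F') (psi : P0 -> P) x0 x0' (s1 s2 : seed n P0 F) (s1' s2' : seed n P F') :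
  seed_eq s1 s2 -> seed_eq s1' s2' -> Corr iota iota' psi x0 x0' s2 s2' ->
  Corr iota iota' psi x0 x0' s1 s1'.
Proof.
move=> [e1 [e2 e3]] [e1' [e2' e3']] [hx [hy hB]]; split; [|split].
- by move=> i; rewrite e1 e1'.
- by move=> i; rewrite e2 e2'.
by rewrite e3 e3'.
Qed.

Unset Implicit Arguments.

Theorem proposition2p26 (n : nat)
    (F : fieldType) (iota : Qsf n -> F) (Sigma : tnode n -> seed n (Qsf n) F)
    (t0 : tnode n)
    (HSigma : cluster_pattern iota Sigma) (Hfree : free_coeffs_at Sigma t0)
    (P : semifield) (F' : fieldType) (iota' : P -> F') (Sigma' : tnode n -> seed n P F')
    (HSigma' : cluster_pattern iota' Sigma')
    (HB : forall t, sB (Sigma t) = sB (Sigma' t))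
    (t t' : tnode n) (sigma : 'S_n) :
  seed_eq (Sigma t) (perm_seed sigma (Sigma t')) ->
  seed_eq (Sigma' t) (perm_seed sigma (Sigma' t')).
Proof.
move=> Heq.
case: HSigma => hom [seeds edges]; case: HSigma' => hom' [seeds' edges'].
set y' := sy (Sigma' t0).
set ps := psi y'.
set x0 := sx (Sigma t0); set x0' := sx (Sigma' t0).
have indep := proj1 (proj1 (seeds t0)).
have nz : forall t i, sx (Sigma' t) i != 0.
  by move=> u; apply: gen_nz hom' (proj1 (seeds' u)).
have Q : forall u, Corr iota iota' ps x0 x0' (Sigma u) (Sigma' u).
  have step : forall k v v', tedge k v v' -> Corr iota iota' ps x0 x0' (Sigma v) (Sigma' v) ->
      Corr iota iota' ps x0 x0' (Sigma v') (Sigma' v').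
    move=> k v v' e hv; apply: Corr_eq (edges k v v' e) (edges' k v v' e) _.
    apply: Corr_mutate => //.
    - exact: psi_one.
    - exact: psi_mul.
    - exact: psi_inv.
    - exact: psi_add.
  move=> u; apply: (tree_reach step (t0 := t0)).
  split; [|split].
  - move=> i; apply: Rel_x => //; exact: psi_one.
  - by move=> i; rewrite /ps Hfree psi_var.
  exact: HB.
have [Qx [Qy QB]] := Q t; have [Qx' [Qy' QB']] := Q t'.
case: Heq => [hx [hy hB]].
split; [|split].
- move=> i /=; apply: (Rel_fun hom hom' (@psi_mul _ _ y') indep (Qx i)).
  rewrite hx /=; exact: Qx'.
- by move=> i /=; rewrite -Qy hy /= Qy'.
by rewrite -QB hB /= QB'.
Qed.
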